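(* Let $p$ be a prime and $n$ a positive integer. Then $n\in\mathcal{M}_p^{(1)}\cup\mathcal{M}_p^{(2)}$ if and only if $p\mid n$, $n/p\in\mathcal{W}$ and $p\in\mathfrak{M}_{n/p}$.
   Context: For positive integers $k,n$ let $S_k(n)=\sum_{i=1}^{n} i^k$. For an integer $a$, $\mathcal{M}_a$ denotes the set of positive integers $n$ such that $S_n(n)\equiv a\pmod{n}$. For a prime $p$: $\mathcal{M}_p^{(1)}=\{n\in\mathcal{M}_p : p\mid n,\ p^2\nmid n\}$ and $\mathcal{M}_p^{(2)}=\{n\in\mathcal{M}_p : p^2\mid n,\ p^3\nmid n\}$. A positive integer $n$ is a weak primary pseudoperfect number if $\sum_{q\mid n,\ q\text{ prime}} \frac{n}{q}+1\equiv 0\pmod{n}$; $\mathcal{W}$ denotes the set of such numbers. For a positive integer $Q$, $\mathfrak{M}_Q=\{m\in\mathbb{N} : S_{Qm}(Qm)\equiv m\pmod{Qm}\}$. *)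

(* Defs.v *)
From mathcomp Require Import all_boot.
Set Implicit Arguments. Unset Strict Implicit. Unset Printing Implicit Defensive.

Definition S (k n : nat) : nat := \sum_(1 <= i < n.+1) i ^ k.

Definition inM (a n : nat) : Prop := 0 < n /\ S n n = a %[mod n].

Definition inM1 (p n : nat) : Prop := inM p n /\ p %| n /\ ~~ (p ^ 2 %| n).
Definition inM2 (p n : nat) : Prop := inM p n /\ p ^ 2 %| n /\ ~~ (p ^ 3 %| n).

Definition inW (n : nat) : Prop :=
  0 < n /\ (\sum_(q <- primes n) n %/ q) + 1 = 0 %[mod n].

Definition inFrakM (Q m : nat) : Prop := 0 < m /\ S (Q * m) (Q * m) = m %[mod Q * m].

(* Main.v *)
Require Import Defs.
From mathcomp Require Import all_boot all_algebra all_solvable all_field.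

Lemma periodic_sum (f : nat -> nat) d :
  (forall i, f (i + d) = f i) -> forall a,
  \sum_(1 <= i < (a * d).+1) f i = a * \sum_(1 <= i < d.+1) f i.
Proof.
move=> Hf; elim=> [|a IH]; first by rewrite mul0n big_geq.
rewrite (@big_cat_nat _ _ _ (a * d).+1) //=; last by rewrite ltnS leq_mul2r leqnSn orbT.
rewrite IH mulSn addnC; congr (_ + _).
have -> : (a * d).+1 = 1 + a * d by [].
rewrite big_addn.
have -> : (a.+1 * d).+1 - a * d = d.+1 by rewrite mulSn -addSn addnK.
apply: eq_bigr => i _.
elim: a {IH} => [|a IHa]; first by rewrite mul0n addn0.
by rewrite mulSn (addnC d) addnA Hf IHa.
Qed.

Lemma S_mod_mul k a d : S k (a * d) = a * S k d %[mod d].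
Proof.
rewrite /S -modn_summ (@periodic_sum (fun i => i ^ k %% d)).
  by rewrite -modnMmr modn_summ modnMmr.
by move=> i; rewrite -modnXm modnDr modnXm.
Qed.

Lemma qe_gt1 q e : prime q -> 0 < e -> 1 < q ^ e.
Proof. by move=> pq e0; rewrite -[1](expn0 q) ltn_exp2l // prime_gt1. Qed.

Lemma e_le_k q e k : prime q -> 0 < k -> q ^ e %| k -> e <= k.
Proof.
move=> pq k0 dk; apply: leq_trans (dvdn_leq k0 dk); apply: ltnW.
by rewrite ltn_expl // prime_gt1.
Qed.

Lemma term_val q e k i : prime q -> 0 < e -> 0 < k -> q ^ e %| k -> q.-1 %| k ->
  i ^ k %% q ^ e = coprime i q.
Proof.
move=> pq e0 k0 dk dk1.
have q1 := qe_gt1 _ _ pq e0.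
case: (boolP (coprime i q)) => cop /=.
  have cope : coprime i (q ^ e) by rewrite coprime_sym coprimeXl // coprime_sym.
  have dt : totient (q ^ e) %| k.
    rewrite totient_pfactor // Gauss_dvd; last first.
      by rewrite coprime_sym coprimeXl // coprime_sym coprimePn // prime_gt0.
    rewrite dk1 /=; apply: dvdn_trans dk; apply: dvdn_exp2l; exact: leq_pred.
  case/dvdnP: dt => c ->.
  rewrite mulnC expnM -modnXm Euler_exp_totient // modnXm exp1n modn_small //.
apply/eqP; rewrite -/(dvdn _ _).
have qi : q %| i by rewrite coprime_sym prime_coprime // negbK in cop.
apply: (@dvdn_trans (q ^ k)); last by rewrite dvdn_exp2r.
apply: dvdn_exp2l; exact: (e_le_k _ _ _ pq k0 dk).
Qed.

Lemma count_coprime q : prime q -> \sum_(1 <= i < q.+1) (coprime i q : nat) = q.-1.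
Proof.
move=> pq; rewrite big_nat_recr ?prime_gt0 //= (prime_coprime q pq) dvdnn addn0.
rewrite (eq_big_nat _ _ (F2 := fun _ => 1)); first by rewrite sum_nat_const_nat muln1 subn1.
move=> i /andP[i1 iq]; rewrite coprime_sym prime_coprime //.
suff -> : (q %| i) = false by [].
by apply/negbTE/negP => /(dvdn_leq i1); rewrite leqNgt iq.
Qed.

Lemma L2 q e k : prime q -> 0 < e -> 0 < k -> q ^ e %| k -> q.-1 %| k ->
  S k (q ^ e) = q.-1 * q ^ e.-1 %[mod q ^ e].
Proof.
move=> pq e0 k0 dk dk1.
rewrite /S -modn_summ (eq_bigr (fun i => (coprime i q : nat))); last first.
  by move=> i _; exact: term_val.
have -> : q ^ e = q ^ e.-1 * q by rewrite -expnSr prednK.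
rewrite (@periodic_sum (fun i => (coprime i q : nat))) ?count_coprime //; first by rewrite mulnC.
by move=> i; rewrite -coprime_modl modnDr coprime_modl.
Qed.

Lemma mul_perm M a k : 0 < M -> coprime a M ->
  (\sum_(i < M) i ^ k) * a ^ k = \sum_(i < M) i ^ k %[mod M].
Proof.
move=> M0 cop.
pose h (i : 'I_M) : 'I_M := Ordinal (ltn_pmod (a * i) M0).
have hinj : injective h.
  move=> i j /(congr1 val) /= /eqP hij; apply: val_inj => /=.
  wlog le_ij : i j hij / i <= j.
    move=> W; case: (leqP i j) => [|/ltnW] l; first exact: W.
    by apply/esym/W; rewrite // eq_sym.
  move: hij; rewrite eq_sym eqn_mod_dvd ?leq_mul2l ?le_ij ?orbT // -mulnBr.
  rewrite Gauss_dvdr; last by rewrite coprime_sym.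
  move=> dv; case: (posnP (j - i)) => [/eqP|pos].
    by rewrite subn_eq0 => ji; apply/eqP; rewrite eqn_leq le_ij ji.
  have := dvdn_leq pos dv; rewrite leqNgt.
  by have := leq_ltn_trans (leq_subr i j) (ltn_ord j) => ->.
rewrite {2}(reindex_inj hinj) /= -modn_summ.
rewrite [in RHS](eq_bigr (fun i : 'I_M => (a * i) ^ k %% M)); last by move=> i _; rewrite modnXm.
rewrite modn_summ big_distrl /=.
by congr (_ %% _); apply: eq_bigr => i _; rewrite expnMn mulnC.
Qed.

Lemma S_T k M : 0 < k -> S k M = \sum_(i < M) i ^ k %[mod M].
Proof.
move=> k0; rewrite /S -(big_mkord xpredT (fun i => i ^ k)).
have -> : \sum_(1 <= i < M.+1) i ^ k = \sum_(0 <= i < M.+1) i ^ k.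
  by rewrite [RHS]big_ltn // exp0n.
rewrite big_nat_recr //= -modnDm -modnXm modnn exp0n // mod0n addn0 modn_mod.
by [].
Qed.

Lemma L3 q e k a : prime q -> 0 < k -> coprime a q -> a ^ k %% q != 1 ->
  q ^ e %| S k (q ^ e).
Proof.
move=> pq k0 cop nak.
have M0 : 0 < q ^ e by rewrite expn_gt0 prime_gt0.
have copM : coprime a (q ^ e) by rewrite coprimeXr.
have a0 : 0 < a.
  case: a cop {nak copM} => // ; rewrite /coprime gcd0n => /eqP q1.
  by move: (prime_gt1 pq); rewrite q1.
have ak0 : 0 < a ^ k by rewrite expn_gt0 a0.
set b := a ^ k - 1.
have akb : a ^ k = 1 + b by rewrite subnKC.
have cb : coprime (q ^ e) b.
  rewrite coprimeXl // prime_coprime //; apply/negP => qb.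
  move: nak; rewrite akb -modnDmr (eqP qb) addn0 modn_small ?eqxx //.
  exact: prime_gt1.
have := mul_perm _ _ k M0 copM; rewrite akb mulnDr muln1 => /eqP.
rewrite -[X in _ == X %[mod _]]addn0 eqn_modDl mod0n.
rewrite -/(dvdn _ _) Gauss_dvdl // /dvdn (S_T _ (q ^ e) k0).
by [].
Qed.


Section NR.
Import GRing.Theory.
Lemma exists_nonroot q k : prime q -> ~~ (q.-1 %| k) ->
  exists a, coprime a q /\ a ^ k %% q != 1.
Proof.
move=> pq nd.
pose F := 'F_q.
have q1 : 0 < q.-1 by rewrite -ltnS prednK ?prime_gt1 ?prime_gt0.
pose rs := enum [pred x : F | (x != 0)%R].
have : has (q.-1).-primitive_root%R rs.
  apply: has_prim_root => //.
  - apply/allP => x; rewrite mem_enum inE => x0.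
    rewrite unity_rootE; apply/eqP.
    apply: (mulIf x0); rewrite GRing.mul1r -exprSr prednK ?prime_gt0 //.
    by have := expf_card x; rewrite (card_Fp pq).
  - exact: enum_uniq.
  - rewrite -cardE cardC1 card_Fp //.
case/hasP => z; rewrite mem_enum inE => z0 pz.
have zE : ((val z)%:R%R : F) = z.
  apply: val_inj; rewrite /= val_Fp_nat // modn_small //.
  by apply: (leq_trans (ltn_ord z)); rewrite Fp_cast.
exists (val z); split.
  by rewrite coprime_sym -unitFpE // zE GRing.unitfE.
apply/negP => /eqP h.
have : ((val z ^ k)%:R%R : F) = 1%R by rewrite -Fp_nat_mod // h.
rewrite natrX zE => zk1.
by move: nd; rewrite (prim_order_dvd pz) zk1 eqxx.
Qed.
End NR.


Lemma G q e n r : prime q -> 0 < e -> 0 < n -> q ^ e %| n ->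
  S n n = r %[mod q ^ e] -> ~~ (q ^ e %| r) ->
  q.-1 %| n /\ r = (n %/ q ^ e) * (q.-1 * q ^ e.-1) %[mod q ^ e].
Proof.
move=> pq e0 n0 dn Hr nr.
have hS := S_mod_mul n (n %/ q ^ e) (q ^ e); rewrite divnK // in hS.
case: (boolP (q.-1 %| n)) => d1.
  split=> //; rewrite -Hr hS -modnMmr L2 // ?modnMmr //.
have [a [ca na]] := exists_nonroot _ _ pq d1.
have dS := L3 _ e _ _ pq n0 ca na.
by move: nr; rewrite /dvdn -Hr hS -/(dvdn _ _) dvdn_mull.
Qed.

Lemma Aarith q e N r : 0 < e -> 0 < q ->
  r = N * (q.-1 * q ^ e.-1) %[mod q ^ e] -> q ^ e %| r + N * q ^ e.-1.
Proof.
move=> e0 q0 H; rewrite /dvdn -modnDml H modnDml.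
have -> : N * (q.-1 * q ^ e.-1) + N * q ^ e.-1 = N * q ^ e.
  by rewrite -mulnDr -mulSnr prednK // -expnS prednK.
by rewrite modnMl.
Qed.

Lemma D1 p n : prime p -> 0 < n -> S n n = p %[mod n] -> ~~ (p ^ 3 %| n).
Proof.
move=> pp n0 H; apply/negP => d3.
have p2n : p ^ 2 %| n by apply: dvdn_trans d3; rewrite dvdn_exp2l.
have nE : n = (n %/ p ^ 3 * p) * p ^ 2 by rewrite -mulnA -expnS divnK.
have hS := S_mod_mul n (n %/ p ^ 3 * p) (p ^ 2); rewrite -nE in hS.
have pS : p %| S n (p ^ 2) by rewrite /dvdn -mulnn S_mod_mul modnMr.
have : p ^ 2 %| S n n.
  by rewrite /dvdn hS -/(dvdn _ _) -mulnn dvdn_mul // dvdn_mull.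
rewrite /dvdn -(modn_dvdm _ p2n) H (modn_dvdm _ p2n) modn_small.
  by move/eqP=> p0; rewrite p0 in pp.
by rewrite -{1}(expn1 p) ltn_exp2l // prime_gt1.
Qed.

Lemma W p n : prime p -> 0 < n -> p %| n -> ~~ (p ^ 3 %| n) ->
  S n n = p %[mod n] -> inW (n %/ p).
Proof.
move=> pp n0 pn np3 H.
set m := n %/ p.
have nm : n = m * p by rewrite divnK.
have m0 : 0 < m by rewrite divn_gt0 ?prime_gt0 // dvdn_leq.
split=> //; rewrite mod0n; apply/eqP; rewrite -/(dvdn _ _).
apply/dvdn_partP => // q qpi.
have qm : q \in primes m by exact: qpi.
move: (qm); rewrite mem_primes => /and3P[pq _ qdm].
rewrite p_part; set f := logn q m.
have f0 : 0 < f by rewrite logn_gt0.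
have Qm : q ^ f %| m by rewrite -p_part dvdn_part.
rewrite (big_rem q qm) /=.
have rest : q ^ f %| \sum_(y <- rem q (primes m)) m %/ y.
  rewrite big_seq; apply: dvdn_sum => r; rewrite mem_rem_uniq ?primes_uniq // inE => /andP[rq].
  rewrite mem_primes => /and3P[pr _ rdm].
  have cr : coprime (q ^ f) r.
    by rewrite coprimeXl // prime_coprime // dvdn_prime2 // eq_sym.
  by rewrite -(Gauss_dvdl (m %/ r) cr) divnK.
rewrite -addnA (addnC _ 1) addnA dvdn_addl //.
have Qn : q ^ f %| n by rewrite nm dvdn_mulr.
case: (eqVneq q p) => [qp | qp].
  subst q.
  have f1 : f = 1.
    apply/eqP; rewrite eqn_leq f0 andbT leqNgt /f -(pfactor_dvdn 2 pp m0).
    apply/negP => d2; move/negP: np3; apply; rewrite nm expnSr dvdn_mul //.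
  rewrite f1 expn1.
  have p2n : p ^ 2 %| n by rewrite nm expnSr expn1 dvdn_mul // -(expn1 p) -f1.
  have Sp : S n n = p %[mod p ^ 2] by rewrite -(modn_dvdm _ p2n) H (modn_dvdm _ p2n).
  have np2p : ~~ (p ^ 2 %| p).
    apply/negP => /(dvdn_leq (prime_gt0 pp)); rewrite leqNgt.
    by rewrite -{1}(expn1 p) ltn_exp2l // prime_gt1.
  have [_ Hc] := G _ _ _ _ pp (isT : 0 < 2) n0 p2n Sp np2p.
  have := Aarith _ _ _ _ (isT : 0 < 2) (prime_gt0 pp) Hc.
  rewrite -mulnn divnMA -/m expn1.
  have -> : p + m %/ p * p = p * (m %/ p + 1) by rewrite mulnDr muln1 mulnC addnC.
  by rewrite dvdn_pmul2l ?prime_gt0.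
have q0 := prime_gt0 pq.
have SQ : S n n = p %[mod q ^ f] by rewrite -(modn_dvdm _ Qn) H (modn_dvdm _ Qn).
have cQp : coprime (q ^ f) p by rewrite coprimeXl // prime_coprime // dvdn_prime2.
have nQp : ~~ (q ^ f %| p).
  apply/negP => Qp; have : q %| p by apply: dvdn_trans Qp; exact: dvdn_exp.
  by rewrite dvdn_prime2 // (negbTE qp).
have [_ Hc] := G _ _ _ _ pq f0 n0 Qn SQ nQp.
have := Aarith _ _ _ _ f0 q0 Hc.
have -> : n %/ q ^ f * q ^ f.-1 = p * (m %/ q).
  apply/eqP; rewrite -(eqn_pmul2r q0) -mulnA -expnSr prednK // divnK //.
  by rewrite -mulnA divnK // mulnC -nm.
by rewrite -{1}(muln1 p) -mulnDr Gauss_dvdr // addnC.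
Qed.

Theorem mainTheorem14 (p n : nat) (hp : prime p) (hn : 0 < n) :
  (inM1 p n \/ inM2 p n) <-> (p %| n /\ inW (n %/ p) /\ inFrakM (n %/ p) p).
Proof.
split.
  case => [[[_ H] [pd np2]] | [[_ H] [p2 np3]]].
    have np3 : ~~ (p ^ 3 %| n).
      apply/negP => d3; move/negP: np2; apply; apply: (dvdn_trans _ d3).
      by rewrite dvdn_exp2l.
    split=> //; split; first exact: W.
    by split; rewrite ?prime_gt0 // divnK.
  have pd : p %| n by apply: (dvdn_trans _ p2); by rewrite -{1}(expn1 p) dvdn_exp2l.
  split=> //; split; first exact: W.
  by split; rewrite ?prime_gt0 // divnK.
case=> pd [hw [p0 hf]]; rewrite divnK // in hf.
have np3 := D1 _ _ hp hn hf.
case: (boolP (p ^ 2 %| n)) => d2; [right | left]; split => //.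
Qed.
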